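(* For $i\in[2]$, let $A^ix^i+b^iy\le d^i$ be totally dual integral inequality systems in variables $x^i\in\mathbb{R}^{n_i}$ and a common scalar variable $y\in\mathbb{R}$, where $A^i\in\mathbb{Z}^{m_i\times n_i}$ and $b^i,d^i\in\mathbb{Z}^{m_i}$, and suppose each of these systems implies $0\le y\le1$. Then the combined system $A^1x^1+b^1y\le d^1$, $A^2x^2+b^2y\le d^2$ (in the variables $(x^1,x^2,y)$) is totally dual integral.
   Context: A system $Ax\le b$ with rational data is totally dual integral if for every integral objective $w$ for which $\max\{w^\top x: Ax\le b\}$ is finite, the dual $\min\{b^\top u: A^\top u=w,\ u\ge0\}$ has an integral optimal solution. *)

(* Defs.v *)
From HB Require Import structures.
From mathcomp Require Import all_boot all_order all_algebra.
Set Implicit Arguments. Unset Strict Implicit. Unset Printing Implicit Defensive.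
Import Order.TTheory GRing.Theory Num.Theory.
Local Open Scope ring_scope.

Definition intmx (R : realFieldType) m n (A : 'M[int]_(m, n)) : 'M[R]_(m, n) :=
  map_mx (fun z : int => z%:~R) A.

Definition feasible (R : realFieldType) m n (A : 'M[int]_(m, n)) (d : 'cV[int]_m)
  (x : 'cV[R]_n) : Prop :=
  forall i : 'I_m, (intmx R A *m x) i ord0 <= (intmx R d) i ord0.

(* Total dual integrality of A x <= d over R: for every integral w such that
   max { w^T x : A x <= d } is finite (the system is feasible and w^T x is
   bounded above on it), the dual min { d^T u : A^T u = w, u >= 0 } has an
   integral optimal solution. *)
Definition TDI (R : realFieldType) m n (A : 'M[int]_(m, n)) (d : 'cV[int]_m) : Prop :=
  forall w : 'cV[int]_n,
    (exists x : 'cV[R]_n, feasible A d x) ->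
    (exists M : R, forall x : 'cV[R]_n, feasible A d x -> ((intmx R w)^T *m x) ord0 ord0 <= M) ->
    exists u : 'cV[int]_m,
      (forall i, 0 <= u i ord0) /\ A^T *m u = w /\
      (forall v : 'cV[R]_m, (forall i, 0 <= v i ord0) -> (intmx R A)^T *m v = intmx R w ->
         ((intmx R d)^T *m intmx R u) ord0 ord0 <= ((intmx R d)^T *m v) ord0 ord0).

(* The system A x + b y <= d in variables (x, y), x in R^n, y in R:
   coefficient matrix [A | b], variable vector of size n + 1 with y last. *)
Definition sysxy m n (A : 'M[int]_(m, n)) (b : 'cV[int]_m) : 'M[int]_(m, n + 1) :=
  row_mx A b.

Definition implies_y01 (R : realFieldType) m n (A : 'M[int]_(m, n)) (b d : 'cV[int]_m) : Prop :=
  forall z : 'cV[R]_(n + 1), feasible (sysxy A b) d z ->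
    0 <= z (rshift n (ord0 : 'I_1)) ord0 <= 1.

Definition combined m1 m2 n1 n2 (A1 : 'M[int]_(m1, n1)) (b1 : 'cV[int]_m1)
  (A2 : 'M[int]_(m2, n2)) (b2 : 'cV[int]_m2) : 'M[int]_(m1 + m2, n1 + n2 + 1) :=
  col_mx (row_mx (row_mx A1 0) b1) (row_mx (row_mx 0 A2) b2).

(* Main.v *)
Require Import Defs.
From HB Require Import structures.
From mathcomp Require Import all_boot all_order all_algebra.
Import Order.TTheory GRing.Theory Num.Theory.
Local Open Scope ring_scope.
From mathcomp Require Import ring lra.
Set Implicit Arguments. Unset Strict Implicit. Unset Printing Implicit Defensive.

Section FM.
Variable R : realFieldType.

Definition isZ (x : R) := exists z : int, x = z%:~R.

Lemma isZ0 : isZ 0. Proof. by exists 0; rewrite mulr0z. Qed.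
Lemma isZ1 : isZ 1. Proof. by exists 1. Qed.
Lemma isZD x y : isZ x -> isZ y -> isZ (x + y).
Proof. by move=> [a ->] [b ->]; exists (a + b); rewrite intrD. Qed.
Lemma isZM x y : isZ x -> isZ y -> isZ (x * y).
Proof. by move=> [a ->] [b ->]; exists (a * b); rewrite intrM. Qed.
Lemma isZN x : isZ x -> isZ (- x).
Proof. by move=> [a ->]; exists (- a); rewrite mulrNz. Qed.
Lemma isZ_int (z : int) : isZ z%:~R. Proof. by exists z. Qed.
Lemma isZ_sum (I : finType) (P : pred I) (F : I -> R) :
  (forall i, P i -> isZ (F i)) -> isZ (\sum_(i | P i) F i).
Proof.
move=> H; apply: (big_ind isZ) => //; [exact: isZ0|exact: isZD].
Qed.

Lemma exists_min (J : finType) (P : pred J) (f : J -> R) :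
  (exists j, P j) -> exists j, P j /\ forall j', P j' -> f j <= f j'.
Proof.
move=> [j0 Pj0].
have : exists j, P j /\ forall j', j' \in enum J -> P j' -> f j <= f j'.
  elim: (enum J) => [|a s [j [Pj Hj]]]; first by exists j0; split.
  case Pa: (P a); last first.
    exists j; split => // j'; rewrite inE => /orP [/eqP ->|]; [by rewrite Pa|exact: Hj].
  case: (leP (f j) (f a)) => hja.
    exists j; split => // j'; rewrite inE => /orP [/eqP ->|] //; exact: Hj.
  exists a; split => // j'; rewrite inE => /orP [/eqP -> //|js Pj'].
  apply: le_trans (Hj j' js Pj'); exact: ltW.
move=> [j [Pj Hj]]; exists j; split => // j' Pj'; apply: Hj => //; exact: mem_enum.
Qed.

Lemma exists_max (J : finType) (P : pred J) (f : J -> R) :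
  (exists j, P j) -> exists j, P j /\ forall j', P j' -> f j' <= f j.
Proof.
move=> /(exists_min (fun j => - f j)) [j [Pj Hj]]; exists j; split => // j' /Hj.
by rewrite lerN2.
Qed.

Lemma between (J : finType) (L U : pred J) (lo hi : J -> R) :
  (forall q p, L q -> U p -> lo q <= hi p) ->
  exists x, (forall q, L q -> lo q <= x) /\ (forall p, U p -> x <= hi p).
Proof.
move=> H.
case: (boolP [exists q, L q]) => [/existsP HL | /existsPn HL].
  have [q [Lq Hq]] := exists_max lo HL.
  by exists (lo q); split => [q' /Hq|p Up]; last exact: H.
case: (boolP [exists p, U p]) => [/existsP HU | /existsPn HU].
  have [p [Up Hp]] := exists_min hi HU.
  exists (hi p); split => [q Lq|p' /Hp //]; by move: (HL q); rewrite Lq.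
exists 0; split => [q Lq|p Up]; [by move: (HL q); rewrite Lq|by move: (HU p); rewrite Up].
Qed.

Lemma sum_ind (I : finType) (p : I) (x : R) (F : I -> R) :
  \sum_i (if i == p then x else 0) * F i = x * F p.
Proof.
rewrite (bigD1 p) //= eqxx big1 ?addr0 // => i /negbTE ->; by rewrite mul0r.
Qed.

Definition mu1 (I : finType) (c : I -> R) (j : (I * I + I)%type) (i : I) : R :=
 match j with
 | inl pq => if (0 < c pq.1) && (c pq.2 < 0) then
     (if i == pq.1 then - c pq.2 else 0) + (if i == pq.2 then c pq.1 else 0) else 0
 | inr r => if c r == 0 then (if i == r then 1 else 0) else 0
 end.

Lemma mu1_ge0 (I : finType) (c : I -> R) j i : 0 <= mu1 c j i.
Proof.
case: j => [[p q]|r] /=.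
  case: ifP => // /andP [cp cq]; apply: addr_ge0; case: ifP => // _.
    by rewrite oppr_ge0 ltW.
  exact: ltW.
by case: ifP => //; case: ifP.
Qed.

Lemma mu1_Z (I : finType) (c : I -> R) j i : (forall i, isZ (c i)) -> isZ (mu1 c j i).
Proof.
move=> Hc; case: j => [[p q]|r] /=.
  case: ifP => _; last exact: isZ0.
  apply: isZD; case: ifP => _; (try exact: isZ0); [exact/isZN|exact: Hc].
case: ifP => _; last exact: isZ0.
case: ifP => _; [exact: isZ1|exact: isZ0].
Qed.

Lemma mu1_sum (I : finType) (c : I -> R) (F : I -> R) j :
  \sum_i mu1 c j i * F i =
  match j with
  | inl pq => if (0 < c pq.1) && (c pq.2 < 0) then - c pq.2 * F pq.1 + c pq.1 * F pq.2 else 0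
  | inr r => if c r == 0 then F r else 0
  end.
Proof.
case: j => [[p q]|r] /=.
  case: ifP => _; last by rewrite big1 // => i _; rewrite mul0r.
  by rewrite -(sum_ind p) -(sum_ind q) -big_split /=; apply: eq_bigr => i _; rewrite mulrDl.
case: ifP => _; last by rewrite big1 // => i _; rewrite mul0r.
by rewrite sum_ind mul1r.
Qed.

Lemma mu1_c (I : finType) (c : I -> R) j : \sum_i mu1 c j i * c i = 0.
Proof.
rewrite mu1_sum; case: j => [[p q]|r] /=.
  by case: ifP => // _; rewrite mulNr [c q * _]mulrC addNr.
by case: ifP => // /eqP.
Qed.

Lemma mu1_step (I : finType) (c : I -> R) (r : I -> R) :
  (forall j, 0 <= \sum_i mu1 c j i * r i) -> exists x, forall i, c i * x <= r i.
Proof.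
move=> H.
have Hb : forall q p, c q < 0 -> 0 < c p -> r q / c q <= r p / c p.
  move=> q p /= cq cp.
  have := H (inl (p, q)); rewrite mu1_sum /= cp cq /= => h.
  rewrite -subr_ge0.
  have e : - c q * r p + c p * r q = (c p * - c q) * (r p / c p - r q / c q).
    by field; rewrite ltr0_neq0 // lt0r_neq0.
  rewrite e in h; move: h; rewrite pmulr_rge0 // mulr_gt0 //.
  by rewrite oppr_gt0.
have [x [Hlo Hhi]] := @between I (fun q => c q < 0) (fun p => 0 < c p)
   (fun q => r q / c q) (fun p => r p / c p) Hb.
exists x => i; case: (ltgtP (c i) 0) => ci.
- have := Hlo i ci => /= h.
  have := ler_wnM2l (ltW ci) h.
  by rewrite mulrCA divff ?mulr1 // ltr0_neq0.
- have := Hhi i ci => /= h.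
  have := ler_wpM2l (ltW ci) h.
  by rewrite mulrCA divff ?mulr1 // lt0r_neq0.
- have := H (inr i); rewrite mu1_sum /= ci eqxx.
  by rewrite mul0r.
Qed.

Lemma sum_exch (I J : finType) (f : J -> R) (g : J -> I -> R) (h : I -> R) :
  \sum_i (\sum_j f j * g j i) * h i = \sum_j f j * \sum_i g j i * h i.
Proof.
under eq_bigr do rewrite mulr_suml.
rewrite exchange_big /=; apply: eq_bigr => j _; rewrite mulr_sumr.
by apply: eq_bigr => i _; rewrite mulrA.
Qed.

Lemma FM n (I : finType) (a : I -> 'I_n -> R) : (forall i k, isZ (a i k)) ->
 exists (J : finType) (mu : J -> I -> R),
 (forall j i, 0 <= mu j i /\ isZ (mu j i)) /\
 (forall j k, \sum_i mu j i * a i k = 0) /\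
 (forall b : I -> R, (forall j, 0 <= \sum_i mu j i * b i) ->
    exists z : 'I_n -> R, forall i, \sum_k a i k * z k <= b i).
Proof.
elim: n I a => [|n IH] I a Ha.
  exists I, (fun j i => if i == j then 1 else 0); split; [|split].
  - by move=> j i; case: ifP => _; split=> //; [exact: isZ1|exact: isZ0].
  - by move=> j [].
  - move=> b Hb; exists (fun _ => 0) => i; rewrite big_ord0.
    by move: (Hb i); rewrite sum_ind mul1r.
pose c := fun i => a i ord0.
pose ar := fun i (k : 'I_n) => a i (lift ord0 k).
pose a1 := fun (j : (I * I + I)%type) (k : 'I_n) => \sum_i mu1 c j i * ar i k.
have Ha1 : forall j k, isZ (a1 j k).
  move=> j k; apply: isZ_sum => i _; apply: isZM; [apply: mu1_Z => i'; exact: Ha|exact: Ha].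
have [J2 [mu2 [H1 [H2 H3]]]] := IH _ a1 Ha1.
exists J2, (fun j i => \sum_j1 mu2 j j1 * mu1 c j1 i); split; [|split].
- move=> j i; split.
    by apply: sumr_ge0 => j1 _; apply: mulr_ge0; [case: (H1 j j1)|exact: mu1_ge0].
  apply: isZ_sum => j1 _; apply: isZM; [by case: (H1 j j1)|].
  by apply: mu1_Z => i'; exact: Ha.
- move=> j k; rewrite sum_exch.
  case: (unliftP ord0 k) => [k'|] ->.
    exact: (H2 j k').
  by rewrite big1 // => j1 _; rewrite mu1_c mulr0.
- move=> b Hb.
  pose b1 := fun j1 => \sum_i mu1 c j1 i * b i.
  have [z' Hz'] : exists z : 'I_n -> R, forall j1, \sum_k a1 j1 k * z k <= b1 j1.
    by apply: H3 => j; have := Hb j; rewrite sum_exch.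
  pose r := fun i => b i - \sum_k ar i k * z' k.
  have [x Hx] : exists x, forall i, c i * x <= r i.
    apply: mu1_step => j1; have := Hz' j1.
    have -> : \sum_k a1 j1 k * z' k = \sum_i mu1 c j1 i * \sum_k ar i k * z' k.
      rewrite /a1 /=; under eq_bigr do rewrite mulr_suml.
      rewrite exchange_big /=; apply: eq_bigr => i _; rewrite mulr_sumr.
      by apply: eq_bigr => k _; rewrite mulrA.
    rewrite -subr_ge0 /b1 -sumrB => h; apply: le_trans h _.
    by rewrite le_eqVlt; apply/orP; left; apply/eqP; apply: eq_bigr => i _; rewrite /r mulrBr.
  exists (fun k => if unlift ord0 k is Some k' then z' k' else x) => i.
  rewrite big_ord_recl unlift_none.
  under eq_bigr do rewrite liftK.
  have := Hx i; rewrite /r /c /ar; lra.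
Qed.

Lemma sum_unit (F : unit -> R) : \sum_(x : unit) F x = F tt.
Proof. by rewrite (bigD1 tt) //= big1 ?addr0 // => -[]. Qed.

Lemma fm_weak (I J : finType) n (a : I -> 'I_n -> R) (mu : J -> I -> R) b z :
  (forall j i, 0 <= mu j i) -> (forall j k, \sum_i mu j i * a i k = 0) ->
  (forall i, \sum_k a i k * z k <= b i) -> forall j, 0 <= \sum_i mu j i * b i.
Proof.
move=> Hmu Ha Hz j.
have E : 0 = \sum_i mu j i * \sum_k a i k * z k.
  rewrite -[LHS](@big1 R 0 +%R 'I_n (index_enum _) xpredT (fun k : 'I_n => 0 * z k)); last by move=> k; rewrite mul0r.
  transitivity (\sum_k (\sum_i mu j i * a i k) * z k).
    by apply: eq_bigr => k _; rewrite Ha.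
  under eq_bigr do rewrite mulr_suml.
  rewrite exchange_big /=; apply: eq_bigr => i _; rewrite mulr_sumr.
  by apply: eq_bigr => k _; rewrite mulrA.
apply: (le_trans (y := \sum_i mu j i * \sum_k a i k * z k)); first by rewrite -E.
by apply: ler_sum => i _; apply: ler_wpM2l.
Qed.

Lemma sdual m n (M : 'M[R]_(m,n)) (d : 'cV[R]_m) (w : 'cV[R]_n) :
 (forall i k, isZ (M i k)) -> (forall k, isZ (w k 0)) ->
 (exists z : 'cV[R]_n, forall i, (M *m z) i 0 <= d i 0) ->
 (exists B, forall z : 'cV[R]_n, (forall i, (M *m z) i 0 <= d i 0) -> (w^T *m z) 0 0 <= B) ->
 exists (z : 'cV[R]_n) (v : 'cV[R]_m) (D : R), (forall i, (M *m z) i 0 <= d i 0) /\ (forall i, 0 <= v i 0) /\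
   M^T *m v = w /\ (d^T *m v) 0 0 <= (w^T *m z) 0 0 /\
   0 < D /\ isZ D /\ (forall i, isZ (D * v i 0)).
Proof.
move=> HM Hw [z0 Hz0] [B HB].
pose a := fun (x : ('I_m + unit)%type) (k : 'I_n) =>
  match x with inl i => M i k | inr _ => - w k 0 end.
have Ha : forall x k, isZ (a x k).
  by move=> [i|[]] k /=; [exact: HM|exact/isZN].
have [J [mu [H1 [H2 H3]]]] := FM Ha.
pose bt := fun (t : R) (x : ('I_m + unit)%type) =>
  match x with inl i => d i 0 | inr _ => - t end.
pose e := fun j => \sum_i mu j (inl i) * d i 0.
pose cj := fun j => mu j (inr tt).
have Hsb : forall t j, \sum_x mu j x * bt t x = e j - cj j * t.
  by move=> t j; rewrite big_sumType sum_unit /= mulrN.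
have Hfeas : forall (zf : 'I_n -> R) t, 
   (forall x, \sum_k a x k * zf k <= bt t x) <->
   (forall i, (M *m \col_k zf k) i 0 <= d i 0) /\ t <= (w^T *m \col_k zf k) 0 0.
  move=> zf t.
  have E1 : forall i, (M *m \col_k zf k) i 0 = \sum_k a (inl i) k * zf k.
    by move=> i; rewrite mxE; apply: eq_bigr => k _; rewrite mxE.
  have E2 : (w^T *m \col_k zf k) 0 0 = - \sum_k a (inr tt) k * zf k.
    rewrite mxE -sumrN; apply: eq_bigr => k _; rewrite !mxE /=; by rewrite mulNr opprK.
  split.
    move=> H; split; first by move=> i; rewrite E1; exact: (H (inl i)).
    by rewrite E2 -lerN2 opprK; exact: (H (inr tt)).
  move=> [Hi Ht] [i|[]] /=; first by rewrite -E1.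
  by move: Ht; rewrite E2 -lerN2 opprK.
pose t0 := (w^T *m z0) 0 0.
have Ht0 : forall j, 0 <= e j - cj j * t0.
  move=> j; rewrite -Hsb.
  apply: (fm_weak (a := a) (z := fun k => z0 k 0)) => //.
    by move=> j' i; case: (H1 j' i).
  apply/(Hfeas (fun k => z0 k 0) t0).
  have -> : (\col_k z0 k 0) = z0 by apply/matrixP => k l; rewrite mxE ord1.
  by split.
pose t1 := `|B| + `|t0| + 1.
have [j1 Hj1] : exists j, e j - cj j * t1 < 0.
  case: (boolP [exists j, e j - cj j * t1 < 0]) => [/existsP //|/existsPn Hn].
  have [zf Hzf] : exists zf : 'I_n -> R, forall x, \sum_k a x k * zf k <= bt t1 x.
    apply: H3 => j; rewrite Hsb; move: (Hn j); by rewrite ltNge negbK.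
  have [/HB hB ht] := (Hfeas zf t1).1 Hzf.
  have := le_trans ht hB; rewrite /t1.
  have := ler_norm B; have := normr_ge0 t0; lra.
have cpos : exists j, 0 < cj j.
  exists j1; have := Ht0 j1; have c0 : 0 <= cj j1 by case: (H1 j1 (inr tt)).
  move=> h2; rewrite lt_def c0 andbT; apply/negP => /eqP c0'.
  move: Hj1 h2; rewrite c0' !mul0r subr0 => h1 h2; lra.
have [js [Hjs Hmin]] := exists_min (fun j => e j / cj j) cpos.
pose ts := e js / cj js.
have [zf Hzf] : exists zf : 'I_n -> R, forall x, \sum_k a x k * zf k <= bt ts x.
  apply: H3 => j; rewrite Hsb.
  have c0 : 0 <= cj j by case: (H1 j (inr tt)).
  case: (boolP (0 < cj j)) => cp.
    have := Hmin j cp; rewrite /ts => h.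
    have h' := ler_wpM2l c0 h.
    have E : cj j * (e j / cj j) = e j by rewrite mulrC divfK // lt0r_neq0.
    rewrite E in h'; lra.
  have c00 : cj j = 0 by apply/eqP; rewrite eq_le c0 andbT leNgt.
  by have := Ht0 j; rewrite c00 !mul0r.
have [Hzi Hzt] := (Hfeas zf ts).1 Hzf.
exists (\col_k zf k), (\col_i (mu js (inl i) / cj js)), (cj js).
split => //; split; [|split; [|split; [|split; [|split]]]] => //.
- move=> i; rewrite mxE; apply: divr_ge0; [by case: (H1 js (inl i))|exact: ltW].
- apply/matrixP => k l; rewrite ord1 !mxE.
  have := H2 js k; rewrite big_sumType sum_unit /= => h.
  have h' : \sum_i mu js (inl i) * M i k = cj js * w k 0.
    by rewrite /cj; move: h; rewrite mulrN; lra.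
  transitivity ((\sum_i mu js (inl i) * M i k) / cj js).
    rewrite mulr_suml; apply: eq_bigr => i _; rewrite !mxE; field.
    exact: lt0r_neq0.
  by rewrite h' mulrC mulKf // lt0r_neq0.
- apply: le_trans Hzt; rewrite mxE /ts /e mulr_suml le_eqVlt; apply/orP; left; apply/eqP.
  by apply: eq_bigr => i _; rewrite !mxE mulrCA mulrA.
- by case: (H1 js (inr tt)).
- move=> i; rewrite mxE mulrCA divff ?mulr1 ?lt0r_neq0 //.
  by case: (H1 js (inl i)).
Qed.

Lemma wdual m n (M : 'M[R]_(m,n)) (d : 'cV[R]_m) (w : 'cV[R]_n) (z : 'cV[R]_n) (v : 'cV[R]_m) :
  (forall i, (M *m z) i 0 <= d i 0) -> (forall i, 0 <= v i 0) -> M^T *m v = w ->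
  (w^T *m z) 0 0 <= (d^T *m v) 0 0.
Proof.
move=> Hz Hv <-.
rewrite trmx_mul trmxK -mulmxA [X in X <= _]mxE [X in _ <= X]mxE.
apply: ler_sum => i _; rewrite [v^T _ _]mxE [d^T _ _]mxE [d i 0 * _]mulrC; exact: ler_wpM2l.
Qed.
End FM.

Definition combT (T : pzRingType) m1 m2 n1 n2 (A1 : 'M[T]_(m1, n1)) (b1 : 'cV[T]_m1)
  (A2 : 'M[T]_(m2, n2)) (b2 : 'cV[T]_m2) : 'M[T]_(m1 + m2, n1 + n2 + 1) :=
  col_mx (row_mx (row_mx A1 0) b1) (row_mx (row_mx 0 A2) b2).

Lemma combT_tr (T : pzRingType) m1 m2 n1 n2 (A1 : 'M[T]_(m1, n1)) (b1 : 'cV[T]_m1)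
  (A2 : 'M[T]_(m2, n2)) (b2 : 'cV[T]_m2) (v1 : 'cV[T]_m1) (v2 : 'cV[T]_m2) :
  (combT A1 b1 A2 b2)^T *m col_mx v1 v2 =
  col_mx (col_mx (A1^T *m v1) (A2^T *m v2)) (b1^T *m v1 + b2^T *m v2).
Proof.
by rewrite /combT tr_col_mx !tr_row_mx !trmx0 mul_row_col !mul_col_mx !mul0mx !add_col_mx addr0 add0r.
Qed.

Lemma combT_mul (T : pzRingType) m1 m2 n1 n2 (A1 : 'M[T]_(m1, n1)) (b1 : 'cV[T]_m1)
  (A2 : 'M[T]_(m2, n2)) (b2 : 'cV[T]_m2) (x1 : 'cV[T]_n1) (x2 : 'cV[T]_n2) (y : 'cV[T]_1) :
  combT A1 b1 A2 b2 *m col_mx (col_mx x1 x2) y =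
  col_mx (A1 *m x1 + b1 *m y) (A2 *m x2 + b2 *m y).
Proof.
by rewrite /combT mul_col_mx !mul_row_col !mul0mx addr0 add0r.
Qed.

Section Main.
Variable R : realFieldType.

Lemma intmx0 m n : intmx R (0 : 'M[int]_(m,n)) = 0.
Proof. by apply/matrixP => i j; rewrite !mxE. Qed.

Lemma intmx_col m1 m2 n (a : 'M[int]_(m1,n)) (b : 'M[int]_(m2,n)) :
  intmx R (col_mx a b) = col_mx (intmx R a) (intmx R b).
Proof. exact: map_col_mx. Qed.

Lemma intmx_sys m n (A : 'M[int]_(m,n)) (b : 'cV[int]_m) :
  intmx R (sysxy A b) = row_mx (intmx R A) (intmx R b).
Proof. exact: map_row_mx. Qed.

Lemma intmx_comb m1 m2 n1 n2 (A1 : 'M[int]_(m1, n1)) (b1 : 'cV[int]_m1)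
  (A2 : 'M[int]_(m2, n2)) (b2 : 'cV[int]_m2) :
  intmx R (combined A1 b1 A2 b2) = combT (intmx R A1) (intmx R b1) (intmx R A2) (intmx R b2).
Proof.
rewrite /combined /combT intmx_col !intmx_sys /intmx !map_row_mx.
by rewrite -!/(intmx R 0) !intmx0.
Qed.

Lemma intmx_dot m (d u : 'cV[int]_m) :
  ((intmx R d)^T *m intmx R u) ord0 ord0 = ((d^T *m u) ord0 ord0)%:~R.
Proof. by rewrite /intmx map_trmx -map_mxM mxE. Qed.

Lemma obj_split n (W : 'cV[R]_n) (S : 'cV[R]_1) (z : 'cV[R]_(n+1)) :
  ((col_mx W S)^T *m z) ord0 ord0 =
  (W^T *m usubmx z) ord0 ord0 + S ord0 ord0 * z (rshift n ord0) ord0.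
Proof.
rewrite -{1}(vsubmxK z) tr_col_mx mul_row_col [in LHS]mxE; congr (_ + _).
by rewrite mxE big_ord1 !mxE.
Qed.

Lemma sub_spec m n (A : 'M[int]_(m,n)) (b d : 'cV[int]_m) (W : 'cV[int]_n) (Q t : R) :
 TDI R (sysxy A b) d -> implies_y01 R A b d ->
 (exists z : 'cV[R]_(n+1), feasible (sysxy A b) d z) ->
 (forall z : 'cV[R]_(n+1), feasible (sysxy A b) d z ->
    ((intmx R W)^T *m usubmx z) ord0 ord0 + t * z (rshift n ord0) ord0 <= Q) ->
 forall s : int, exists (u : 'cV[int]_m) (z : 'cV[R]_(n+1)),
   (forall i, 0 <= u i ord0) /\ (sysxy A b)^T *m u = col_mx W (const_mx s) /\
   feasible (sysxy A b) d z /\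
   ((d^T *m u) ord0 ord0)%:~R <=
     ((intmx R W)^T *m usubmx z) ord0 ord0 + s%:~R * z (rshift n ord0) ord0.
Proof.
move=> HT Hy Hf HQ s.
have Hval : forall z : 'cV[R]_(n+1), ((intmx R (col_mx W (const_mx s)))^T *m z) ord0 ord0 =
    ((intmx R W)^T *m usubmx z) ord0 ord0 + s%:~R * z (rshift n ord0) ord0.
  by move=> z; rewrite intmx_col obj_split !mxE.
have Hb : exists B, forall z : 'cV[R]_(n+1), feasible (sysxy A b) d z ->
    ((intmx R (col_mx W (const_mx s)))^T *m z) ord0 ord0 <= B.
  exists (Q + `|s%:~R - t|) => z Hz; rewrite Hval.
  have := HQ z Hz; have /andP[h0 h1] := Hy z Hz.
  have p : (s%:~R - t) * z (rshift n ord0) ord0 <= `|s%:~R - t|.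
    apply: le_trans (ler_wpM2r h0 (ler_norm _)) _.
    by rewrite -[X in _ <= X]mulr1; apply: ler_wpM2l.
  lra.
have [u [Hu0 [HuA Huopt]]] := HT (col_mx W (const_mx s)) Hf Hb.
have [z' [v' [D' [Hz' [Hv' [HvA [Hop _]]]]]]] :=
  sdual (M := intmx R (sysxy A b)) (d := intmx R d) (w := intmx R (col_mx W (const_mx s)))
     (fun i k => ltac:(rewrite mxE; exact: isZ_int)) (fun k => ltac:(rewrite mxE; exact: isZ_int)) Hf Hb.
exists u, z'; split; [|split; [|split]] => //.
rewrite -Hval -intmx_dot; apply: le_trans Hop; exact: Huopt.
Qed.


Lemma comb_feas m1 m2 n1 n2 (A1 : 'M[int]_(m1, n1)) (b1 d1 : 'cV[int]_m1)
  (A2 : 'M[int]_(m2, n2)) (b2 d2 : 'cV[int]_m2) (x1 : 'cV[R]_n1) (x2 : 'cV[R]_n2) (y : 'cV[R]_1) :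
  feasible (combined A1 b1 A2 b2) (col_mx d1 d2) (col_mx (col_mx x1 x2) y) ->
  feasible (sysxy A1 b1) d1 (col_mx x1 y) /\ feasible (sysxy A2 b2) d2 (col_mx x2 y).
Proof.
rewrite /feasible intmx_comb combT_mul !intmx_sys !mul_row_col intmx_col => H; split => i.
  by have := H (lshift m2 i); rewrite !col_mxEu.
by have := H (rshift m1 i); rewrite !col_mxEd.
Qed.

Lemma core (k t2 c th Q1 Q2 g1a h1a g1b h1b g2a h2a g2b h2b V1a V1b V2a V2b : R) :
 (k + th) + t2 = c -> 0 <= th -> th <= 1 ->
 0 <= h1a <= 1 -> 0 <= h1b <= 1 -> 0 <= h2a <= 1 -> 0 <= h2b <= 1 ->
 V1a <= g1a + k * h1a -> g1a + (k + th) * h1a <= Q1 ->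
 V1b <= g1b + (k+1) * h1b -> g1b + (k + th) * h1b <= Q1 ->
 V2a <= g2a + (c-k) * h2a -> g2a + t2 * h2a <= Q2 ->
 V2b <= g2b + (c-k-1) * h2b -> g2b + t2 * h2b <= Q2 ->
 (V1a + 1 <= V1b -> V1a + V2a <= Q1 + Q2) /\ (V1b <= V1a -> V1b + V2b <= Q1+Q2).
Proof.
move=> E th0 th1 /andP[a0 a1] /andP[b0 b1] /andP[c0 c1] /andP[d0 d1] Ha Ha' Hb Hb' Hc Hc' Hd Hd'.
have p1 : 0 <= (1-th)*(1-h1b) by apply: mulr_ge0; lra.
have p2 : 0 <= th*(1-h2a) by apply: mulr_ge0; lra.
have p3 : 0 <= th*h1a by apply: mulr_ge0.
have p4 : 0 <= (1-th)*h2b by apply: mulr_ge0; lra.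
have Ec : c - k = t2 + th by lra.
have Ec' : c - k - 1 = t2 + th - 1 by lra.
rewrite Ec in Hc; rewrite Ec' in Hd.
split => H; lra.
Qed.

End Main.

Unset Implicit Arguments.

Theorem proposition3p9 (R : realFieldType) (m1 m2 n1 n2 : nat)
  (A1 : 'M[int]_(m1, n1)) (b1 d1 : 'cV[int]_m1)
  (A2 : 'M[int]_(m2, n2)) (b2 d2 : 'cV[int]_m2) :
  TDI R (sysxy A1 b1) d1 -> TDI R (sysxy A2 b2) d2 ->
  implies_y01 R A1 b1 d1 -> implies_y01 R A2 b2 d2 ->
  TDI R (combined A1 b1 A2 b2) (col_mx d1 d2).
Proof.
move=> T1 T2 Y1 Y2 w Hf Hb.
pose w1 := usubmx (usubmx w); pose w2 := dsubmx (usubmx w); pose wc := dsubmx w.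
have wE : w = col_mx (col_mx w1 w2) wc by rewrite !vsubmxK.
have [zs [vs [Dn [Hzs [Hvs [HvW [Hopt [Dpos [DZ DvZ]]]]]]]]] :=
  sdual (M := intmx R (combined A1 b1 A2 b2)) (d := intmx R (col_mx d1 d2)) (w := intmx R w)
     (fun i k => ltac:(rewrite mxE; exact: isZ_int)) (fun k => ltac:(rewrite mxE; exact: isZ_int)) Hf Hb.
pose x1 := usubmx (usubmx zs); pose x2 := dsubmx (usubmx zs); pose ys := dsubmx zs.
have zsE : zs = col_mx (col_mx x1 x2) ys by rewrite !vsubmxK.
have [F1 F2] : feasible (sysxy A1 b1) d1 (col_mx x1 ys) /\ feasible (sysxy A2 b2) d2 (col_mx x2 ys).
  by apply: comb_feas; rewrite -zsE.
pose v1 := usubmx vs; pose v2 := dsubmx vs.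
have vsE : vs = col_mx v1 v2 by rewrite vsubmxK.
have [[E1 E2] Ec] : ((intmx R A1)^T *m v1 = intmx R w1 /\ (intmx R A2)^T *m v2 = intmx R w2) /\
   (intmx R b1)^T *m v1 + (intmx R b2)^T *m v2 = intmx R wc.
  move: HvW; rewrite vsE intmx_comb combT_tr {1}wE !intmx_col.
  by move=> /eq_col_mx [/eq_col_mx [-> ->] ->].
pose t1 := ((intmx R b1)^T *m v1) ord0 ord0.
pose t2 := ((intmx R b2)^T *m v2) ord0 ord0.
pose Q1 := ((intmx R d1)^T *m v1) ord0 ord0.
pose Q2 := ((intmx R d2)^T *m v2) ord0 ord0.
pose c := wc ord0 ord0.
have Hct : t1 + t2 = c%:~R.
  by have := congr1 (fun M : 'M[R]_1 => M ord0 ord0) Ec; rewrite /= [X in X = _ -> _]mxE [X in _ = X -> _]mxE.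
have v1ge0 : forall i, 0 <= v1 i ord0 by move=> i; rewrite mxE.
have v2ge0 : forall i, 0 <= v2 i ord0 by move=> i; rewrite mxE.
have HQ1 : forall z : 'cV[R]_(n1+1), feasible (sysxy A1 b1) d1 z ->
    ((intmx R w1)^T *m usubmx z) ord0 ord0 + t1 * z (rshift n1 ord0) ord0 <= Q1.
  move=> z Hz; rewrite -obj_split; apply: wdual Hz v1ge0 _.
  by rewrite intmx_sys tr_row_mx mul_col_mx E1.
have HQ2 : forall z : 'cV[R]_(n2+1), feasible (sysxy A2 b2) d2 z ->
    ((intmx R w2)^T *m usubmx z) ord0 ord0 + t2 * z (rshift n2 ord0) ord0 <= Q2.
  move=> z Hz; rewrite -obj_split; apply: wdual Hz v2ge0 _.
  by rewrite intmx_sys tr_row_mx mul_col_mx E2.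
have HQs : Q1 + Q2 = ((intmx R (col_mx d1 d2))^T *m vs) ord0 ord0.
  by rewrite intmx_col tr_col_mx vsE mul_row_col [in RHS]mxE.
have fin : forall (ua : 'cV[int]_m1) (ub : 'cV[int]_m2) (s1 s2 : int),
    (forall i, 0 <= ua i ord0) -> (forall i, 0 <= ub i ord0) ->
    (sysxy A1 b1)^T *m ua = col_mx w1 (const_mx s1) ->
    (sysxy A2 b2)^T *m ub = col_mx w2 (const_mx s2) -> s1 + s2 = c ->
    ((d1^T *m ua) ord0 ord0)%:~R + ((d2^T *m ub) ord0 ord0)%:~R <= Q1 + Q2 ->
    exists u : 'cV[int]_(m1 + m2),
      (forall i, 0 <= u i ord0) /\ (combined A1 b1 A2 b2)^T *m u = w /\
      (forall v : 'cV[R]_(m1 + m2), (forall i, 0 <= v i ord0) ->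
         (intmx R (combined A1 b1 A2 b2))^T *m v = intmx R w ->
         ((intmx R (col_mx d1 d2))^T *m intmx R u) ord0 ord0 <=
         ((intmx R (col_mx d1 d2))^T *m v) ord0 ord0).
  move=> ua ub s1 s2 Ha Hb' Ea Eb Es HV.
  exists (col_mx ua ub); split; [|split].
  - move=> i; rewrite -(splitK i); case: (split i) => j /=.
      by rewrite col_mxEu.
    by rewrite col_mxEd.
  - rewrite (_ : combined A1 b1 A2 b2 = combT A1 b1 A2 b2) // combT_tr.
    move: Ea Eb; rewrite /sysxy !tr_row_mx !mul_col_mx.
    move=> /eq_col_mx [-> ->] /eq_col_mx [-> ->].
    rewrite [RHS]wE; congr col_mx; apply/matrixP => i j; rewrite !mxE Es.
    by move: i j => [[|//] ?] [[|//] ?]; rewrite /c /wc mxE; congr (w _ _); apply: val_inj.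
  - move=> v Hv HvA.
    rewrite !intmx_col tr_col_mx mul_row_col [X in X <= _]mxE !intmx_dot.
    apply: le_trans HV _; rewrite HQs; apply: le_trans Hopt _.
    by rewrite -tr_col_mx -intmx_col; exact: wdual Hzs Hv HvA.
have [dz Hdz] := DZ.
have [nz Hnz] : isZ (Dn * t1).
  rewrite /t1 mxE mulr_sumr; apply: isZ_sum => i _.
  rewrite !mxE mulrCA; apply: isZM; [exact: isZ_int|exact: DvZ].
have dzpos : (0 < dz)%R by rewrite -(ltr0z R) -Hdz.
have nzE := divz_eq nz dz.
have r0 := modz_ge0 nz (lt0r_neq0 dzpos).
have r1 := ltz_pmod nz dzpos.
set k := (nz %/ dz)%Z in nzE r0 r1 *.
set r := (nz %% dz)%Z in nzE r0 r1 *.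
pose th := t1 - k%:~R.
have t1E : t1 = k%:~R + th by rewrite /th addrC subrK.
have Hth : Dn * th = r%:~R.
  rewrite /th mulrBr Hnz Hdz nzE intrD intrM; ring.
have th0 : 0 <= th.
  by rewrite -(pmulr_rge0 _ Dpos) Hth ler0z.
have th1 : th <= 1.
  rewrite -(ler_pM2l Dpos) Hth mulr1 Hdz ler_int; exact: ltW.
rewrite t1E in HQ1.
have S1 := sub_spec T1 Y1 (ex_intro _ _ F1) HQ1.
have S2 := sub_spec T2 Y2 (ex_intro _ _ F2) HQ2.
have [u1a [p1a [U1a [E1a [F1a V1a]]]]] := S1 k.
have [u1b [p1b [U1b [E1b [F1b V1b]]]]] := S1 (k + 1).
have [u2a [p2a [U2a [E2a [F2a V2a]]]]] := S2 (c - k).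
have [u2b [p2b [U2b [E2b [F2b V2b]]]]] := S2 (c - k - 1).
rewrite intrD in V1b; rewrite intrB in V2a; rewrite !intrB in V2b.
have E : k%:~R + th + t2 = c%:~R by rewrite -t1E.
have [C1 C2] := core E th0 th1 (Y1 _ F1a) (Y1 _ F1b) (Y2 _ F2a) (Y2 _ F2b)
   V1a (HQ1 _ F1a) V1b (HQ1 _ F1b) V2a (HQ2 _ F2a) V2b (HQ2 _ F2b).
case: (lerP ((d1^T *m u1a) ord0 ord0 + 1) ((d1^T *m u1b) ord0 ord0)) => H.
  apply: (fin u1a u2a k (c - k)) => //; first by ring.
  apply: C1; rewrite -(ler_int R) intrD in H; exact: H.
apply: (fin u1b u2b (k + 1) (c - k - 1)) => //; first by ring.
apply: C2; rewrite ltzD1 -(ler_int R) in H; exact: H.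
Qed.
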